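(* Let $\mathbf{M}=\langle M,+,\vee,\wedge,0,1,-1\rangle$ be a unital commutative distributive $\ell$-monoid. The following are equivalent: (1) $\mathbf{M}$ is cancellative, i.e. for all $x,y,z\in M$, $x+z=y+z$ implies $x=y$; (2) for all $x,y,z\in\{w\in M\mid 0\le w\le 1\}$, if $x+z=y+z$ then $x=y$; (3) for all $x,y,z\in\Gamma(\mathbf{M})$, if $x\oplus z=y\oplus z$ and $x\odot z=y\odot z$ then $x=y$.
   Context: A \emph{unital commutative distributive $\ell$-monoid} is an algebra $\langle M,+,\vee,\wedge,0,1,-1\rangle$ (arities $2,2,2,0,0,0$) such that: $\langle M,\vee,\wedge\rangle$ is a distributive lattice (with order $\le$); $\langle M,+,0\rangle$ is a commutative monoid; $+$ distributes over $\vee$ and $\wedge$; $-1+1=0$; $-1\le 0\le 1$; and for every $x\in M$ there is $n\in\mathbb{N}\setminus\{0\}$ with $(-1)+\dots+(-1)\le x\le 1+\dots+1$ ($n$ summands each). For such $\mathbf{M}$, $\Gamma(\mathbf{M})$ is the set $\{x\in M\mid 0\le x\le 1\}$ with $\vee,\wedge,0,1$ restricted and $x\oplus y:=(x+y)\wedge 1$, $x\odot y:=(x+y+(-1))\vee 0$. *)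

(* Defs.v *)
From Stdlib Require Import Arith.

Record UCDLMonoid := {
  carrier :> Type;
  madd : carrier -> carrier -> carrier;
  mjoin : carrier -> carrier -> carrier;
  mmeet : carrier -> carrier -> carrier;
  mzero : carrier;
  mone : carrier;
  mmone : carrier;
  join_assoc : forall x y z, mjoin x (mjoin y z) = mjoin (mjoin x y) z;
  join_comm : forall x y, mjoin x y = mjoin y x;
  meet_assoc : forall x y z, mmeet x (mmeet y z) = mmeet (mmeet x y) z;
  meet_comm : forall x y, mmeet x y = mmeet y x;
  join_meet_absorb : forall x y, mjoin x (mmeet x y) = x;
  meet_join_absorb : forall x y, mmeet x (mjoin x y) = x;
  meet_join_distr : forall x y z,
      mmeet x (mjoin y z) = mjoin (mmeet x y) (mmeet x z);
  add_assoc : forall x y z, madd x (madd y z) = madd (madd x y) z;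
  add_comm : forall x y, madd x y = madd y x;
  add_0l : forall x, madd mzero x = x;
  add_join_distr : forall x y z, madd x (mjoin y z) = mjoin (madd x y) (madd x z);
  add_meet_distr : forall x y z, madd x (mmeet y z) = mmeet (madd x y) (madd x z);
  mone_inv : madd mmone mone = mzero;
  (* -1 <= 0 <= 1, with x <= y := x v y = y *)
  mmone_le0 : mjoin mmone mzero = mzero;
  zero_le1 : mjoin mzero mone = mone;
  (* strong unit condition: n-fold sums *)
  unit_bound : forall x, exists n, 0 < n /\
      mjoin (Nat.iter n (madd mmone) mzero) x = x /\
      mjoin x (Nat.iter n (madd mone) mzero) = Nat.iter n (madd mone) mzero
}.

Arguments madd {_}. Arguments mjoin {_}. Arguments mmeet {_}.
Arguments mzero {_}. Arguments mone {_}. Arguments mmone {_}.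

Definition mle {M : UCDLMonoid} (x y : M) : Prop := mjoin x y = y.

(* Gamma(M) operations *)
Definition moplus {M : UCDLMonoid} (x y : M) : M := mmeet (madd x y) mone.
Definition modot {M : UCDLMonoid} (x y : M) : M :=
  mjoin (madd (madd x y) mmone) mzero.

Definition in_unit_interval {M : UCDLMonoid} (x : M) : Prop :=
  mle mzero x /\ mle x mone.

(* Main.v *)
Require Import Defs.
From Stdlib Require Import Arith.

Local Infix "+m" := madd (at level 50, left associativity).
Local Notation "x ⊔ y" := (mjoin x y) (at level 40, left associativity).
Local Notation "x ⊓ y" := (mmeet x y) (at level 40, left associativity).

Lemma add_0r {M : UCDLMonoid} (x : M) : x +m mzero = x.
Proof. rewrite add_comm; apply add_0l. Qed.

Lemma join_idem {M : UCDLMonoid} (x : M) : x ⊔ x = x.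
Proof. rewrite <- (meet_join_absorb M x x) at 2. apply join_meet_absorb. Qed.

Lemma le_meet {M : UCDLMonoid} (x y : M) : mle x y -> x ⊓ y = x.
Proof. unfold mle; intro H. rewrite <- H. apply meet_join_absorb. Qed.

Lemma meet_le {M : UCDLMonoid} (x y : M) : x ⊓ y = x -> mle x y.
Proof. unfold mle; intro H. rewrite <- H, join_comm, meet_comm. apply join_meet_absorb. Qed.

Lemma le_refl {M : UCDLMonoid} (x : M) : mle x x.
Proof. apply join_idem. Qed.

Lemma le_trans {M : UCDLMonoid} (x y z : M) : mle x y -> mle y z -> mle x z.
Proof. unfold mle; intros H1 H2. rewrite <- H2, join_assoc, H1. reflexivity. Qed.

Lemma le_antisym {M : UCDLMonoid} (x y : M) : mle x y -> mle y x -> x = y.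
Proof. unfold mle; intros H1 H2. rewrite <- H1, <- H2 at 1. apply join_comm. Qed.

Lemma le_join_l {M : UCDLMonoid} (x y : M) : mle x (x ⊔ y).
Proof. unfold mle. rewrite join_assoc, join_idem. reflexivity. Qed.

Lemma le_join_r {M : UCDLMonoid} (x y : M) : mle y (x ⊔ y).
Proof. rewrite join_comm. apply le_join_l. Qed.

Lemma join_lub {M : UCDLMonoid} (x y z : M) : mle x z -> mle y z -> mle (x ⊔ y) z.
Proof. unfold mle; intros H1 H2. rewrite <- join_assoc, H2, H1. reflexivity. Qed.

Lemma meet_le_l {M : UCDLMonoid} (x y : M) : mle (x ⊓ y) x.
Proof. unfold mle. rewrite join_comm. apply join_meet_absorb. Qed.

Lemma meet_le_r {M : UCDLMonoid} (x y : M) : mle (x ⊓ y) y.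
Proof. rewrite meet_comm. apply meet_le_l. Qed.

Lemma meet_glb {M : UCDLMonoid} (x y z : M) : mle z x -> mle z y -> mle z (x ⊓ y).
Proof.
  intros H1 H2. apply meet_le. apply le_meet in H1. apply le_meet in H2.
  rewrite meet_assoc, H1, H2. reflexivity.
Qed.

Lemma le_add {M : UCDLMonoid} (x y z : M) : mle x y -> mle (x +m z) (y +m z).
Proof.
  unfold mle; intro H. rewrite (add_comm _ x), (add_comm _ y), <- add_join_distr, H.
  reflexivity.
Qed.

Lemma le_add_l {M : UCDLMonoid} (x y z : M) : mle x y -> mle (z +m x) (z +m y).
Proof. intro H. rewrite (add_comm _ z x), (add_comm _ z y). apply le_add, H. Qed.

Lemma lat_cancel {M : UCDLMonoid} (a b c : M) :
  a ⊓ c = b ⊓ c -> a ⊔ c = b ⊔ c -> a = b.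
Proof.
  intros H1 H2.
  transitivity (a ⊓ (b ⊔ c)).
  { rewrite <- H2. symmetry. apply meet_join_absorb. }
  rewrite meet_join_distr, H1, (meet_comm _ a b), <- meet_join_distr.
  rewrite H2, meet_join_absorb. reflexivity.
Qed.

Lemma add_ACA {M : UCDLMonoid} (a b c d : M) :
  (a +m b) +m (c +m d) = (a +m c) +m (b +m d).
Proof.
  rewrite !add_assoc. f_equal. rewrite <- !add_assoc. f_equal. apply add_comm.
Qed.

Lemma add_m1_1 {M : UCDLMonoid} (a : M) : a +m mmone +m mone = a.
Proof. rewrite <- add_assoc, mone_inv. apply add_0r. Qed.

Lemma add_1_m1 {M : UCDLMonoid} (a : M) : a +m mone +m mmone = a.
Proof. rewrite <- add_assoc, (add_comm _ mone), mone_inv. apply add_0r. Qed.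

Lemma le01 {M : UCDLMonoid} : mle (@mzero M) mone.
Proof. apply zero_le1. Qed.

Lemma lem10 {M : UCDLMonoid} : mle (@mmone M) mzero.
Proof. apply mmone_le0. Qed.

Lemma key_id {M : UCDLMonoid} (c : M) : (c ⊔ mzero) +m (c ⊓ mzero) = c.
Proof.
  apply le_antisym.
  - rewrite (add_comm _ (c ⊔ mzero)), add_join_distr, add_0r. apply join_lub.
    + apply (le_trans _ (mzero +m c)). apply le_add. apply meet_le_r.
      rewrite add_0l. apply le_refl.
    + apply meet_le_l.
  - rewrite add_meet_distr, add_0r. apply meet_glb.
    + apply (le_trans _ (mzero +m c)). rewrite add_0l. apply le_refl.
      apply le_add. apply le_join_r.
    + apply le_join_l.
Qed.

Lemma decomp {M : UCDLMonoid} (z : M) : (z ⊓ mone) +m (z ⊔ mone) = z +m mone.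
Proof.
  set (c := z +m mmone).
  assert (E : z = c +m mone) by (unfold c; symmetry; apply add_m1_1).
  assert (Em : z ⊓ mone = (c ⊓ mzero) +m mone).
  { rewrite (add_comm _ _ mone), add_meet_distr, add_0r, (add_comm _ mone). exact (f_equal (fun t => t ⊓ mone) E). }
  assert (Ej : z ⊔ mone = (c ⊔ mzero) +m mone).
  { rewrite (add_comm _ _ mone), add_join_distr, add_0r, (add_comm _ mone). exact (f_equal (fun t => t ⊔ mone) E). }
  rewrite Em, Ej, add_ACA, (add_comm _ (c ⊓ mzero)), key_id, add_assoc. exact (f_equal (fun t => t +m mone) (eq_sym E)).
Qed.

Definition Pn {M : UCDLMonoid} (n : nat) : M := Nat.iter n (madd mone) mzero.
Definition Nn {M : UCDLMonoid} (n : nat) : M := Nat.iter n (madd mmone) mzero.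

Lemma Pn_S {M : UCDLMonoid} n : @Pn M (S n) = mone +m Pn n.
Proof. reflexivity. Qed.
Lemma Nn_S {M : UCDLMonoid} n : @Nn M (S n) = mmone +m Nn n.
Proof. reflexivity. Qed.

Lemma PN0 {M : UCDLMonoid} n : @Pn M n +m Nn n = mzero.
Proof.
  induction n as [|n IH]; simpl. apply add_0l.
  change (Nat.iter n (madd mone) mzero) with (@Pn M n).
  change (Nat.iter n (madd mmone) mzero) with (@Nn M n).
  rewrite add_ACA, IH, (add_comm _ mone), mone_inv. apply add_0l.
Qed.

Lemma Pn_add {M : UCDLMonoid} a b : @Pn M (a + b) = Pn a +m Pn b.
Proof.
  induction a as [|a IH]. simpl. symmetry; apply add_0l.
  simpl plus. rewrite !Pn_S, IH. apply add_assoc.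
Qed.

Lemma Nn_add {M : UCDLMonoid} a b : @Nn M (a + b) = Nn a +m Nn b.
Proof.
  induction a as [|a IH]. simpl. symmetry; apply add_0l.
  simpl plus. rewrite !Nn_S, IH. apply add_assoc.
Qed.

Lemma Pn_ge0 {M : UCDLMonoid} n : mle mzero (@Pn M n).
Proof.
  induction n as [|n IH]. apply le_refl.
  rewrite Pn_S. apply (le_trans _ mone). apply le01.
  rewrite <- (add_0r mone) at 1. apply le_add_l, IH.
Qed.

Lemma Nn_le0 {M : UCDLMonoid} n : mle (@Nn M n) mzero.
Proof.
  induction n as [|n IH]. apply le_refl.
  rewrite Nn_S. apply (le_trans _ mmone). 2: apply lem10.
  rewrite <- (add_0r mmone) at 2. apply le_add_l, IH.
Qed.

Lemma Pn_S_ge1 {M : UCDLMonoid} n : mle mone (@Pn M (S n)).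
Proof. rewrite Pn_S. rewrite <- (add_0r mone) at 1. apply le_add_l, Pn_ge0. Qed.

Lemma Pn_S_m1 {M : UCDLMonoid} n : @Pn M (S n) +m mmone = Pn n.
Proof. rewrite Pn_S, (add_comm _ mone), add_1_m1. reflexivity. Qed.

Lemma Pn_mono {M : UCDLMonoid} a b : mle (@Pn M a) (Pn (a + b)).
Proof.
  rewrite Pn_add. rewrite <- (add_0r (Pn a)) at 1. apply le_add_l, Pn_ge0.
Qed.

Lemma Nn_mono {M : UCDLMonoid} a b : mle (@Nn M (a + b)) (Nn a).
Proof.
  rewrite Nn_add. rewrite <- (add_0r (Nn a)) at 2. apply le_add_l, Nn_le0.
Qed.

Lemma bounds {M : UCDLMonoid} (x y : M) : exists n,
  mle (Nn n) x /\ mle x (Pn n) /\ mle (Nn n) y /\ mle y (Pn n).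
Proof.
  destruct (unit_bound M x) as [a [_ [Ha1 Ha2]]].
  destruct (unit_bound M y) as [b [_ [Hb1 Hb2]]].
  exists (a + b). repeat split.
  - apply (le_trans _ (Nn a)). apply Nn_mono. exact Ha1.
  - apply (le_trans _ (Pn a)). exact Ha2. apply Pn_mono.
  - rewrite Nat.add_comm. apply (le_trans _ (Nn b)). apply Nn_mono. exact Hb1.
  - rewrite Nat.add_comm. apply (le_trans _ (Pn b)). exact Hb2. apply Pn_mono.
Qed.

Lemma shift_bounds {M : UCDLMonoid} (x : M) n :
  mle (Nn n) x -> mle x (Pn n) -> mle mzero (x +m Pn n) /\ mle (x +m Pn n) (Pn (n + n)).
Proof.
  intros H1 H2. split.
  - rewrite <- (PN0 n), add_comm. apply le_add, H1.
  - rewrite Pn_add. apply le_add, H2.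
Qed.

Definition canc {M : UCDLMonoid} (z : M) := forall x y : M, x +m z = y +m z -> x = y.

Lemma canc_add {M : UCDLMonoid} (a b : M) : canc a -> canc b -> canc (a +m b).
Proof. intros Ha Hb x y H. apply Ha, Hb. rewrite <- !add_assoc. exact H. Qed.

Lemma canc_of_add {M : UCDLMonoid} (a b : M) : canc (a +m b) -> canc a.
Proof. intros H x y E. apply H. rewrite !add_assoc, E. reflexivity. Qed.

Lemma canc_inv {M : UCDLMonoid} (a w : M) : a +m w = mzero -> canc a.
Proof.
  intros Hw x y E. rewrite <- (add_0r x), <- (add_0r y), <- Hw, !add_assoc, E.
  reflexivity.
Qed.

Lemma canc_one {M : UCDLMonoid} : canc (@mone M).
Proof. apply (canc_inv _ mmone). rewrite add_comm. apply mone_inv. Qed.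

Lemma canc_Pn {M : UCDLMonoid} n : canc (@Pn M n).
Proof. apply (canc_inv _ (Nn n)). apply PN0. Qed.

Lemma upper_part {M : UCDLMonoid} (x : M) m :
  mle mzero x -> mle x (Pn (S m)) ->
  mle mzero ((x ⊔ mone) +m mmone) /\ mle ((x ⊔ mone) +m mmone) (Pn m).
Proof.
  intros H1 H2. split.
  - rewrite <- (@mone_inv M), add_comm. apply le_add, le_join_r.
  - rewrite <- Pn_S_m1. apply le_add. apply join_lub. exact H2. apply Pn_S_ge1.
Qed.

Lemma lower_part {M : UCDLMonoid} (x : M) :
  mle mzero x -> in_unit_interval (x ⊓ mone).
Proof. intro H. split. apply meet_glb. exact H. apply le01. apply meet_le_r. Qed.

Definition P2prop (M : UCDLMonoid) := forall x y z : M, in_unit_interval x -> in_unit_interval y ->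
              in_unit_interval z -> madd x z = madd y z -> x = y.

Lemma shift_join {M : UCDLMonoid} (x z : M) :
  ((x ⊔ mone) +m mmone) +m z = ((x +m z) ⊔ (mone +m z)) +m mmone.
Proof.
  rewrite <- add_assoc, (add_comm _ mmone z), add_assoc.
  rewrite (add_comm _ (x ⊔ mone) z), add_join_distr, (add_comm _ z x), (add_comm _ z mone).
  reflexivity.
Qed.

Lemma shift_meet {M : UCDLMonoid} (x z : M) :
  (x ⊓ mone) +m z = (x +m z) ⊓ (mone +m z).
Proof.
  rewrite (add_comm _ (x ⊓ mone) z), add_meet_distr, (add_comm _ z x), (add_comm _ z mone).
  reflexivity.
Qed.

Lemma canc_unit {M : UCDLMonoid} (HP2 : P2prop M) (z : M) :
  in_unit_interval z -> canc z.
Proof.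
  intro Hz.
  assert (Q : forall m (x y : M), mle mzero x -> mle x (Pn m) -> mle mzero y -> mle y (Pn m) ->
            x +m z = y +m z -> x = y).
  { induction m as [|m IH]; intros x y Hx1 Hx2 Hy1 Hy2 E.
    - simpl in *. transitivity (@mzero M).
      apply le_antisym; assumption. apply le_antisym; assumption.
    - destruct (upper_part x m Hx1 Hx2) as [U1 U2].
      destruct (upper_part y m Hy1 Hy2) as [V1 V2].
      assert (Ej : (x ⊔ mone) +m mmone = (y ⊔ mone) +m mmone).
      { apply IH; try assumption. rewrite !shift_join, E. reflexivity. }
      assert (Ej' : x ⊔ mone = y ⊔ mone).
      { rewrite <- (add_m1_1 (x ⊔ mone)), Ej, add_m1_1. reflexivity. }
      assert (Em : x ⊓ mone = y ⊓ mone).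
      { apply HP2 with z; try apply lower_part; try assumption.
        rewrite !shift_meet, E. reflexivity. }
      apply (lat_cancel _ _ mone); assumption. }
  intros x y E.
  destruct (bounds x y) as [n [Hx1 [Hx2 [Hy1 Hy2]]]].
  destruct (shift_bounds x n Hx1 Hx2) as [X1 X2].
  destruct (shift_bounds y n Hy1 Hy2) as [Y1 Y2].
  apply (canc_Pn n).
  apply (Q (n + n)); try assumption.
  rewrite <- !add_assoc, !(add_comm _ (Pn n) z), !add_assoc, E. reflexivity.
Qed.

Lemma canc_all {M : UCDLMonoid} (HP2 : P2prop M) (z : M) : canc z.
Proof.
  assert (Q : forall m (z : M), mle mzero z -> mle z (Pn m) -> canc z).
  { induction m as [|m IH]; intros w H1 H2.
    - simpl in H2. assert (w = mzero) by (apply le_antisym; assumption). subst w.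
      intros x y E. rewrite !add_0r in E. exact E.
    - destruct (upper_part w m H1 H2) as [U1 U2].
      assert (C1 : canc (w ⊓ mone)) by (apply canc_unit; [exact HP2 | apply lower_part, H1]).
      assert (C2 : canc (w ⊔ mone)).
      { rewrite <- (add_m1_1 (w ⊔ mone)). apply canc_add. apply IH; assumption. apply canc_one. }
      apply (canc_of_add _ mone). rewrite <- decomp. apply canc_add; assumption. }
  destruct (bounds z z) as [n [Hx1 [Hx2 _]]].
  destruct (shift_bounds z n Hx1 Hx2) as [X1 X2].
  apply (canc_of_add _ (Pn n)). apply (Q (n + n)); assumption.
Qed.

Lemma join_recover {M : UCDLMonoid} (a : M) :
  ((a +m mmone) ⊔ mzero) +m mone = a ⊔ mone.
Proof.
  rewrite (add_comm _ _ mone), add_join_distr, add_0r, (add_comm _ mone (a +m mmone)), add_m1_1.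
  reflexivity.
Qed.

Theorem mainTheorem2 (M : UCDLMonoid) :
  let P1 := forall x y z : M, madd x z = madd y z -> x = y in
  let P2 := forall x y z : M, in_unit_interval x -> in_unit_interval y ->
              in_unit_interval z -> madd x z = madd y z -> x = y in
  let P3 := forall x y z : M, in_unit_interval x -> in_unit_interval y ->
              in_unit_interval z -> moplus x z = moplus y z ->
              modot x z = modot y z -> x = y in
  (P1 <-> P2) /\ (P2 <-> P3).
Proof.
  intros P1 P2 P3. split; split.
  - intros H x y z _ _ _ E. exact (H x y z E).
  - intros H x y z E. exact (canc_all H z x y E).
  - intros H x y z Hx Hy Hz Ho Hd. apply (H x y z Hx Hy Hz).
    unfold moplus, modot in *.
    apply (lat_cancel _ _ mone). exact Ho.
    rewrite <- !join_recover, Hd. reflexivity.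
  - intros H x y z Hx Hy Hz E. apply (H x y z Hx Hy Hz); unfold moplus, modot; rewrite E; reflexivity.
Qed.
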